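(* Let $S$ be a set, let $f:2^S\to 2^S$ be monotonic with respect to $\subseteq$, and let $\mathcal{W}\subseteq 2^S$ be a set of subsets of $S$ each of which is well-supported for $f$. Then $\bigcup\mathcal{W}$ is well-supported for $f$.
   Context: The Axiom of Choice is assumed. For a binary relation ${\prec}$ on $X$ and $x\in X$, $\prec^{-1}(x)=\{x'\in X\mid x'\prec x\}$. A pair $(X,\prec)$ is a support ordering for $f$ if $X\subseteq S$, ${\prec}\subseteq X\times X$, and $x\in f(\prec^{-1}(x))$ for every $x\in X$. A relation is well-founded if every nonempty subset $Y$ of its carrier has an element $y$ such that no $y'\in Y$, $y'\neq y$, satisfies $y'\prec y$. A set $X\subseteq S$ is well-supported for $f$ if there is a well-founded ${\prec}\subseteq X\times X$ such that $(X,\prec)$ is a support ordering for $f$. *)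

(* Defs.v *)
Set Implicit Arguments.

Definition subset {S : Type} (A B : S -> Prop) : Prop := forall x, A x -> B x.

Definition monotonic {S : Type} (f : (S -> Prop) -> (S -> Prop)) : Prop :=
  forall A B, subset A B -> subset (f A) (f B).

Definition preimage_rel {S : Type} (prec : S -> S -> Prop) (x : S) : S -> Prop :=
  fun x' => prec x' x.

Definition support_ordering {S : Type} (f : (S -> Prop) -> (S -> Prop))
  (X : S -> Prop) (prec : S -> S -> Prop) : Prop :=
  (forall x y, prec x y -> X x /\ X y) /\
  (forall x, X x -> f (preimage_rel prec x) x).

Definition well_founded_on {S : Type} (X : S -> Prop) (prec : S -> S -> Prop) : Prop :=
  forall Y : S -> Prop, subset Y X -> (exists y, Y y) ->
    exists y, Y y /\ forall y', Y y' -> y' <> y -> ~ prec y' y.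

Definition well_supported {S : Type} (f : (S -> Prop) -> (S -> Prop)) (X : S -> Prop) : Prop :=
  exists prec : S -> S -> Prop, well_founded_on X prec /\ support_ordering f X prec.

Definition bigunion {S : Type} (W : (S -> Prop) -> Prop) : S -> Prop :=
  fun x => exists A, W A /\ A x.

(* Main.v *)
Require Import Defs.
From Stdlib Require Import ClassicalEpsilon Classical.
From mathcomp Require Import ssreflect ssrfun ssrbool eqtype.
From mathcomp Require Import boolp wochoice.

Lemma wo_antisym (T : eqType) (R : rel T) : well_order R ->
  forall x y, R x y -> R y x -> x = y.
Proof.
move=> wo x y Rxy Ryx.
have Rxx : forall z, R z z.
  move=> z; have [|m [[m1 lb] _]] := wo (pred1 z); first by exists z; rewrite inE.
  have e : m = z by move: m1; rewrite inE => /eqP.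
  by rewrite -{1 2}e; apply: lb; rewrite e inE.
have [|m [_ uniq]] := wo [pred z | (z == x) || (z == y)].
  by exists x; rewrite inE eqxx.
have hx : minimum_of R [pred z | (z == x) || (z == y)] x.
  split; first by rewrite inE eqxx.
  by move=> z; rewrite inE => /orP[/eqP->|/eqP->].
have hy : minimum_of R [pred z | (z == x) || (z == y)] y.
  split; first by rewrite inE eqxx orbT.
  by move=> z; rewrite inE => /orP[/eqP->|/eqP->].
by rewrite -(uniq _ hx) -(uniq _ hy).
Qed.

Theorem lemma7 (S : Type) (f : (S -> Prop) -> (S -> Prop))
  (W : (S -> Prop) -> Prop) :
  monotonic f ->
  (forall X, W X -> well_supported f X) ->
  well_supported f (bigunion W).
Proof.
move=> mono hW.
have [R wo] := well_ordering_principle (S -> Prop).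
have antis := @wo_antisym _ R wo.
pose inh1 := inhabits (fun _ : S => False).
pose inh2 := inhabits (fun _ _ : S => False).
pose A (x : S) : {pred (S -> Prop)} := fun X => `[< W X /\ X x >].
pose idx (x : S) := epsilon inh1 (fun Z => minimum_of R (A x) Z).
pose p (X : S -> Prop) := epsilon inh2
  (fun pr => well_founded_on X pr /\ support_ordering f X pr).
have hidx : forall x, bigunion W x -> minimum_of R (A x) (idx x).
  move=> x [X [WX Xx]]; apply: (epsilon_spec inh1 (fun Z => minimum_of R (A x) Z)).
  have [|m [hm _]] := wo (A x); last by exists m.
  by exists X; apply/asboolP.
have hp : forall X, W X -> well_founded_on X (p X) /\ support_ordering f X (p X).
  move=> X WX; apply: (epsilon_spec inh2 (fun pr => well_founded_on X pr /\ support_ordering f X pr)).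
  exact: (hW X WX).
have inA : forall x X, X \in A x -> W X /\ X x.
  by move=> x X /asboolP.
pose prec x' x := bigunion W x' /\ bigunion W x /\
  ((R (idx x') (idx x) /\ idx x' <> idx x) \/
   (idx x' = idx x /\ p (idx x) x' x)).
exists prec; split; last first.
  split; first by move=> x y [? [? _]].
  move=> x Ux.
  have [/inA [Wi ix] _] := hidx x Ux.
  have [_ [_ sup]] := hp _ Wi.
  apply: (mono _ _ _ _ (sup x ix)) => x' px'.
  have [dom _] := hp _ Wi.
  have [ix' _] := (proj1 (proj2 (hp _ Wi))) _ _ px'.
  have Ux' : bigunion W x' by exists (idx x).
  split; first exact Ux'. split; first exact Ux.
  have [_ lb] := hidx x' Ux'.
  have Rle : R (idx x') (idx x) by apply: lb; apply/asboolP.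
  have [e|ne] := Classical_Prop.classic (idx x' = idx x).
    by right; split => //; rewrite e.
  by left.
move=> Y sY [y0 Yy0].
have [|m [[mI lbm] _]] := wo (fun Z => `[< exists y, Y y /\ idx y = Z >]).
  by exists (idx y0); apply/asboolP; exists y0.
move: mI => /asboolP [y1 [Yy1 ey1]].
have [/inA [Wm my1] _] : minimum_of R (A y1) m by rewrite -ey1; apply: hidx; apply: sY.
have [wf _] := hp _ Wm.
have h1 : Defs.subset (fun y => Y y /\ idx y = m) m.
  move=> y [Yy ey]; have [/inA [_ ?] _] := hidx y (sY y Yy); by rewrite -ey.
have h2 : exists y, Y y /\ idx y = m by exists y1.
have [y [[Yy ey] hmin]] := wf _ h1 h2.
exists y; split => // y' Yy' ne [_ [_ [[Rl nl]|[el pl]]]].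
  apply: nl; apply: antis => //; rewrite ey.
  by apply: lbm; apply/asboolP; exists y'.
apply: (hmin y') => //; first by split => //; rewrite el.
by rewrite ey in pl.
Qed.
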